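(* For every $u\in\mathcal{N}_\lambda^+$, $$J_\lambda(u)\le-\frac{(q-p)(p+\alpha-1)}{qp(1-\alpha)}\big(a\|u\|^p+\|u\|_p^p\big)-b\,\frac{(q-p\theta)(p\theta+\alpha-1)}{qp\theta(1-\alpha)}\|u\|^{p\theta}<0.$$
   Context: Let $s\in(0,1)$, $p>1$, $n>ps$, $p_s^*=\frac{np}{n-ps}$, $\Omega\subset\mathbb{R}^n$ a bounded smooth domain, $a,b>0$, $\theta>1$, $\alpha\in(0,1)$, $c\in L^\infty(\Omega)$, $c\ge0$, $\lambda>0$, and $1<p<p\theta<q\le p_s^*$. $X_0$ is the space of measurable $u$ on $\mathbb{R}^n$ vanishing a.e. outside $\Omega$ with $\|u\|:=\big(\int_{\mathbb{R}^{2n}}\frac{|u(x)-u(y)|^p}{|x-y|^{n+ps}}dxdy\big)^{1/p}<\infty$; $\|u\|_r$ is the $L^r(\Omega)$ norm; $u^+=\max\{u,0\}$. $f$ is homogeneous of order $q-1$ in the second variable, $F(x,t)=\int_0^tf(x,\tau)d\tau$, $qF=tf$. $J_\lambda(u)=\frac1p(a\|u\|^p+\|u\|_p^p)+\frac b{p\theta}\|u\|^{p\theta}-\frac1{1-\alpha}\int_\Omega c(u^+)^{1-\alpha}-\lambda\int_\Omega F(x,u^+)$. For $u\in X_0$ set $\varphi_u'(1)=a\|u\|^p+\|u\|_p^p+b\|u\|^{p\theta}-\int_\Omega c(u^+)^{1-\alpha}-\lambda q\int_\Omega F(x,u^+)$ and $\varphi_u''(1)=(p-1)(a\|u\|^p+\|u\|_p^p)+b(p\theta-1)\|u\|^{p\theta}+\alpha\int_\Omega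 c(u^+)^{1-\alpha}-\lambda q(q-1)\int_\Omega F(x,u^+)$; $\mathcal{N}_\lambda^+=\{u\in X_0:\varphi_u'(1)=0,\ \varphi_u''(1)>0\}$. *)

(* Defs.v *)
From HB Require Import structures.
From mathcomp Require Import all_boot all_order all_algebra.
From mathcomp Require Import all_classical all_reals all_analysis.

Set Implicit Arguments.
Unset Strict Implicit.
Unset Printing Implicit Defensive.
Import Order.TTheory GRing.Theory Num.Theory.
Import numFieldNormedType.Exports.

Local Open Scope classical_set_scope.
Local Open Scope ring_scope.

Section Defs.
Variable R : realType.

(** MathComp-Analysis has no Lebesgue measure on R^n, so the integral of a
    NONNEGATIVE function over R^n is defined as the iterated Lebesgue
    integral over R (equal to the Lebesgue integral on R^n by Tonelli). *)
Fixpoint iterint (n : nat) (g : (nat -> R) -> \bar R) : \bar R :=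
  match n with
  | 0 => g (fun _ => 0)
  | m.+1 => (\int[lebesgue_measure]_(t in [set: R])
               iterint m (fun s => g (fun i => if i is j.+1 then s j else t)))%E
  end.

Definition rowof (n : nat) (s : nat -> R) : 'rV[R]_n := \row_(i < n) s i.

Definition lebint (n : nat) (g : 'rV[R]_n -> \bar R) : \bar R :=
  iterint n (fun s => g (rowof n s)).

Definition lebint2 (n : nat) (g : 'rV[R]_n -> 'rV[R]_n -> \bar R) : \bar R :=
  lebint (fun x => lebint (fun y => g x y)).

Definition Rint_on (n : nat) (Om : set 'rV[R]_n) (g : 'rV[R]_n -> R) : R :=
  fine (lebint (fun x => (Num.max (g x) 0 * \1_Om x)%:E))
  - fine (lebint (fun x => (Num.max (- g x) 0 * \1_Om x)%:E)).

Definition enorm (n : nat) (x : 'rV[R]_n) : R :=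
  Num.sqrt (\sum_(i < n) x ord0 i ^+ 2).

Definition measurable_Rn (n : nat) (u : 'rV[R]_n -> R) : Prop :=
  measurable_fun [set: n.-tuple R] (fun t : n.-tuple R => u (\row_(i < n) tnth t i)).

Definition gagliardo_int (n : nat) (s p : R) (u : 'rV[R]_n -> R) : \bar R :=
  lebint2 (fun x y =>
    ((`|u x - u y| `^ p) / (enorm (x - y) `^ (n%:R + p * s)))%:E).

Definition X0norm (n : nat) (s p : R) (u : 'rV[R]_n -> R) : R :=
  fine (gagliardo_int s p u) `^ p^-1.

Definition Lnorm_on (n : nat) (Om : set 'rV[R]_n) (r : R) (u : 'rV[R]_n -> R) : R :=
  fine (lebint (fun x => (`|u x| `^ r * \1_Om x)%:E)) `^ r^-1.

Definition in_X0 (n : nat) (s p : R) (Om : set 'rV[R]_n) (u : 'rV[R]_n -> R) : Prop :=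
  [/\ measurable_Rn u,
      lebint (fun x => (\1_(~` Om) x * (u x != 0)%:R)%:E) = 0%E
    & (gagliardo_int s p u < +oo)%E].

Fixpoint iterD (m : nat) (vs : seq 'rV[R]_m) (h : 'rV[R]_m -> R) : 'rV[R]_m -> R :=
  match vs with
  | [::] => h
  | v :: vs' => 'D_v (iterD vs' h)
  end.

Definition smooth_fun (m : nat) (h : 'rV[R]_m -> R) : Prop :=
  forall vs : seq 'rV[R]_m,
    continuous (iterD vs h) /\ forall (a v : 'rV[R]_m), derivable (iterD vs h) a v.

Definition bounded_smooth_domain (n : nat) (Om : set 'rV[R]_n) : Prop :=
  [/\ open Om, connected Om, Om !=set0,
      (exists M : R, forall x, Om x -> `|x| <= M)
    & forall x0, (closure Om `\` Om) x0 ->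
        exists r : R, 0 < r /\
        exists phi : 'rV[R]_n -> R, smooth_fun phi /\
          (exists v : 'rV[R]_n, 'D_v phi x0 != 0) /\
          forall x, ball x0 r x -> (Om x <-> phi x < 0)].

Definition homogeneous2 (n : nat) (Om : set 'rV[R]_n) (q : R)
    (f : 'rV[R]_n -> R -> R) : Prop :=
  forall x, Om x -> forall (k t : R), 0 < k -> f x (k * t) = k `^ (q - 1) * f x t.

Definition Fprim (n : nat) (f : 'rV[R]_n -> R -> R) (x : 'rV[R]_n) (t : R) : R :=
  if 0 <= t then Rintegral lebesgue_measure `[0, t] (f x)
  else - Rintegral lebesgue_measure `[t, 0] (f x).

Definition posp (r : R) : R := Num.max r 0.

Section Functional.
Variables (n : nat) (s p : R) (Om : set 'rV[R]_n) (a b theta alpha : R)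
  (c : 'rV[R]_n -> R) (lambda q : R) (f : 'rV[R]_n -> R -> R).

Definition Aterm (u : 'rV[R]_n -> R) : R :=
  a * X0norm s p u `^ p + Lnorm_on Om p u `^ p.

Definition Cterm (u : 'rV[R]_n -> R) : R :=
  Rint_on Om (fun x => c x * posp (u x) `^ (1 - alpha)).

Definition Fterm (u : 'rV[R]_n -> R) : R :=
  Rint_on Om (fun x => Fprim f x (posp (u x))).

Definition J_lambda (u : 'rV[R]_n -> R) : R :=
  p^-1 * Aterm u + b / (p * theta) * X0norm s p u `^ (p * theta)
  - (1 - alpha)^-1 * Cterm u - lambda * Fterm u.

Definition phi1 (u : 'rV[R]_n -> R) : R :=
  Aterm u + b * X0norm s p u `^ (p * theta) - Cterm u - lambda * q * Fterm u.

Definition phi2 (u : 'rV[R]_n -> R) : R :=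
  (p - 1) * Aterm u + b * (p * theta - 1) * X0norm s p u `^ (p * theta)
  + alpha * Cterm u - lambda * q * (q - 1) * Fterm u.

Definition Nplus (u : 'rV[R]_n -> R) : Prop :=
  [/\ in_X0 s p Om u, phi1 u = 0 & 0 < phi2 u].

End Functional.
End Defs.

(* Main.v *)
Require Import Defs.
From HB Require Import structures.
From mathcomp Require Import all_boot all_order all_algebra.
From mathcomp Require Import all_classical all_reals all_analysis.
From mathcomp Require Import measurable_realfun.
From mathcomp Require Import ring lra.
Import Order.TTheory GRing.Theory Num.Theory.
Import numFieldNormedType.Exports.
Local Open Scope classical_set_scope.
Local Open Scope ring_scope.

Section S.
Variable R : realType.
Import HBNNSimple.
Local Notation mu := (@lebesgue_measure R).

Definition consf (t : R) (s : nat -> R) : nat -> R := fun i => if i is j.+1 then s j else t.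
Definition tup m (s : nat -> R) : m.-tuple R := [tuple s (nat_of_ord i) | i < m].

Lemma tnth_tup m s (i : 'I_m) : tnth (tup m s) i = s i.
Proof. by rewrite tnth_mktuple. Qed.

Lemma tupS m t s : tup m.+1 (consf t s) = [tuple of t :: tup m s].
Proof.
apply: eq_from_tnth => i; rewrite tnth_tup.
case: i => [[|j] Hj] //=.
have Hj' : (j < m)%N by [].
rewrite (tnth_nth 0) /=.
have -> : nth 0 (tup m s) j = nth 0 (tup m s) (Ordinal Hj') by [].
by rewrite -tnth_nth tnth_tup.
Qed.

Lemma iterintS m (g : (nat -> R) -> \bar R) :
  iterint m.+1 g = (\int[mu]_(t in [set: R]) iterint m (fun s => g (consf t s)))%E.
Proof. by []. Qed.

Lemma ge0_le_integralT d (T : measurableType d) (nu : {measure set T -> \bar R}) (f1 f2 : T -> \bar R) :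
  (forall x, 0 <= f1 x)%E -> (forall x, f1 x <= f2 x)%E ->
  (\int[nu]_x f1 x <= \int[nu]_x f2 x)%E.
Proof.
move=> f10 f12; have f20 x : (0 <= f2 x)%E by apply: le_trans (f12 x).
rewrite !ge0_integralTE//; apply: le_ereal_sup => _ [h hf <-]; exists h => //.
by move=> x; exact: le_trans (hf x) (f12 x).
Qed.

Lemma null_int d (T : measurableType d) (nu : {measure set T -> \bar R}) (N : set T) (f : T -> \bar R) :
  measurable N -> nu N = 0%E -> (forall x, 0 <= f x)%E -> (forall x, ~ N x -> f x = 0%E) ->
  (\int[nu]_x f x = 0)%E.
Proof.
move=> mN N0 f0 fN; apply/eqP; rewrite eq_le integral_ge0// andbT.
rewrite ge0_integralTE//; apply: ge_ereal_sup => _ [h hf <-].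
have := @integral_nnsfun _ _ _ nu setT measurableT h.
rewrite patch_setT => <-.
rewrite (ge0_negligible_integral _ _ _ _ N0)//.
- rewrite integral0_eq// => x [_ Nx]; apply/eqP; rewrite eq_le.
  apply/andP; split; last by rewrite lee_fin fun_ge0.
  by rewrite -(fN x Nx) hf.
- by apply/measurable_EFinP; exact: measurable_funPT.
- by move=> x _; rewrite lee_fin fun_ge0.
Qed.

Lemma iterint_ge0 m (g : (nat -> R) -> \bar R) :
  (forall s, 0 <= g s)%E -> (0 <= iterint m g)%E.
Proof.
elim: m g => [|m IH] g g0 //=.
by apply: integral_ge0 => t _; apply: IH.
Qed.

Lemma iterint_meas m : forall d (T : measurableType d) (K : T * m.-tuple R -> \bar R),
  measurable_fun setT K -> (forall z, 0 <= K z)%E ->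
  measurable_fun setT (fun x => iterint m (fun s => K (x, tup m s))).
Proof.
elim: m => [|m IH] d T K mK K0.
  rewrite /=; apply: (measurableT_comp mK).
  apply: measurable_fun_pair => //; exact: measurable_cst.
pose K' := fun z : (T * R) * m.-tuple R => K (z.1.1, [tuple of z.1.2 :: z.2]).
have mK' : measurable_fun setT K'.
  apply: measurableT_comp => //; apply: measurable_fun_pair.
    exact: measurableT_comp.
  by apply: measurable_cons => //; exact: measurableT_comp.
pose F := fun x => iterint m (fun s => K' (x, tup m s)).
have mF : measurable_fun setT F := IH _ _ K' mK' (fun z => K0 _).
have F0 : forall z, (0 <= F z)%E by move=> z; apply: iterint_ge0 => s; exact: K0.
have := @measurable_fun_fubini_tonelli_F _ _ T _ R mu F mF F0.
rewrite /fubini_F.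
apply: eq_measurable_fun => x _ /=.
apply: eq_integral => t _; rewrite /F /K'; congr iterint.
by apply: funext => s; rewrite tupS.
Qed.

Lemma int0_null (F : R -> \bar R) : measurable_fun setT F -> (forall t, 0 <= F t)%E ->
  (\int[mu]_(t in [set: R]) F t = 0)%E ->
  exists N : set R, [/\ measurable N, mu N = 0%E & forall t, ~ N t -> F t = 0%E].
Proof.
move=> mF F0 iF.
have : (\int[mu]_(t in [set: R]) `|F t| = 0)%E.
  by rewrite -iF; apply: eq_integral => t _; rewrite gee0_abs.
move/(ae_eq_integral_abs mu measurableT mF) => [N [mN N0 sub]].
exists N; split => // t Nt; apply: contrapT => Ft; apply: Nt; apply: sub => /=.
by move=> /(_ I).
Qed.

Lemma iterint_zero m : forall (K1 K2 : m.-tuple R -> \bar R) (k : (nat -> R) -> \bar R),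
  measurable_fun setT K1 -> measurable_fun setT K2 ->
  (forall w, 0 <= K1 w)%E -> (forall w, 0 <= K2 w)%E -> (forall s, 0 <= k s)%E ->
  iterint m (fun s => K1 (tup m s)) = 0%E -> iterint m (fun s => K2 (tup m s)) = 0%E ->
  (forall s, K1 (tup m s) = 0%E -> K2 (tup m s) = 0%E -> k s = 0%E) ->
  iterint m k = 0%E.
Proof.
elim: m => [|m IH] K1 K2 k mK1 mK2 K10 K20 k0 I1 I2 H; first by apply: H.
pose F1 t := iterint m (fun s => K1 [tuple of t :: tup m s]).
pose F2 t := iterint m (fun s => K2 [tuple of t :: tup m s]).
have mFi : forall K : (m.+1).-tuple R -> \bar R, measurable_fun setT K -> (forall w, 0 <= K w)%E ->
    measurable_fun setT (fun t => iterint m (fun s => K [tuple of t :: tup m s])).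
  move=> K mK K0.
  have := @iterint_meas m _ R (fun z => K [tuple of z.1 :: z.2]).
  apply.
    apply: (measurableT_comp mK).
    by apply: measurable_cons => //; exact: measurableT_comp.
  by move=> z; exact: K0.
have eF : forall K : (m.+1).-tuple R -> \bar R, iterint m.+1 (fun s => K (tup m.+1 s)) =
    (\int[mu]_(t in [set: R]) iterint m (fun s => K [tuple of t :: tup m s]))%E.
  move=> K; rewrite iterintS; apply: eq_integral => t _; congr iterint.
  by apply: funext => s; rewrite tupS.
have [N1 [mN1 N10 HN1]] := @int0_null _ (mFi K1 mK1 K10)
  (fun t => iterint_ge0 _ _ (fun s => K10 _)) (etrans (esym (eF K1)) I1).
have [N2 [mN2 N20 HN2]] := @int0_null _ (mFi K2 mK2 K20)
  (fun t => iterint_ge0 _ _ (fun s => K20 _)) (etrans (esym (eF K2)) I2).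
rewrite iterintS; apply: (@null_int _ _ mu (N1 `|` N2)).
- exact: measurableU.
- apply/eqP; rewrite eq_le measure_ge0 andbT.
  apply: (le_trans (measureU2 _ _ _)) => //.
  by apply: (@le_trans _ _ (0 + 0)%E); [apply: leeD; [rewrite -N10|rewrite -N20] | rewrite adde0].
- by move=> t; apply: iterint_ge0.
move=> t /not_orP [nN1 nN2].
apply: (IH (fun w => K1 [tuple of t :: w]) (fun w => K2 [tuple of t :: w])).
- apply: (measurableT_comp mK1).
  exact: measurable_cons.
- apply: (measurableT_comp mK2).
  exact: measurable_cons.
- by move=> w; exact: K10.
- by move=> w; exact: K20.
- by move=> s; exact: k0.
- exact: HN1.
- exact: HN2.
- by move=> s h1 h2; apply: H; rewrite tupS.
Qed.

Lemma iterint0 m : iterint m (fun _ : nat -> R => 0%E) = 0%E.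
Proof.
elim: m => [|m IH] //=.
by rewrite (eq_integral (fun _ => 0%E)) ?integral0// => t _; rewrite IH.
Qed.

Lemma iterint_le m (g1 g2 : (nat -> R) -> \bar R) :
  (forall s, 0 <= g1 s)%E -> (forall s, g1 s <= g2 s)%E -> (iterint m g1 <= iterint m g2)%E.
Proof.
elim: m g1 g2 => [|m IH] g1 g2 g10 g12 //=.
apply: ge0_le_integralT => t; first by apply: iterint_ge0.
by apply: IH.
Qed.

Definition rowt n (w : n.-tuple R) : 'rV[R]_n := \row_(i < n) tnth w i.
Arguments rowt {n}.

Lemma rowt_tup n s : rowt (tup n s) = rowof n s.
Proof. by apply/rowP => i; rewrite !mxE tnth_tup. Qed.

Lemma enorm_gt0 n (z : 'rV[R]_n) : z != 0 -> 0 < enorm z.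
Proof.
move=> z0; rewrite /enorm sqrtr_gt0.
have [i zi] : exists i, z ord0 i != 0.
  apply/existsP; apply: contraNT z0 => /existsPn H; apply/eqP/rowP => i.
  by rewrite mxE; apply/eqP; move: (H i); rewrite negbK.
rewrite (bigD1 i)//= ltr_wpDr ?sumr_ge0// => [j _|]; first exact: sqr_ge0.
by rewrite exprn_even_gt0 ?zi.
Qed.

Lemma meas_enorm n : measurable_fun setT (fun z : n.-tuple R * n.-tuple R => enorm (rowt z.1 - rowt z.2)).
Proof.
rewrite /enorm; apply: measurableT_comp; first exact: (continuous_measurable_fun (@sqrt_continuous R)).
apply: measurable_sum => i.
apply: (eq_measurable_fun (fun z : n.-tuple R * n.-tuple R => (tnth z.1 i - tnth z.2 i) ^+ 2)).
  by move=> z _; rewrite !mxE.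
apply: measurable_funX; apply: measurable_funB.
  exact: measurableT_comp (measurable_tnth i) measurable_fst.
exact: measurableT_comp (measurable_tnth i) measurable_snd.
Qed.

Definition Kg n (s p : R) (u : 'rV[R]_n -> R) (z : n.-tuple R * n.-tuple R) : \bar R :=
  ((`|u (rowt z.1) - u (rowt z.2)| `^ p) / (enorm (rowt z.1 - rowt z.2) `^ (n%:R + p * s)))%:E.

Lemma Kg_ge0 n s p u z : (0 <= @Kg n s p u z)%E.
Proof. by rewrite lee_fin divr_ge0// powR_ge0. Qed.

Lemma meas_Kg n s p u : measurable_Rn u -> measurable_fun setT (@Kg n s p u).
Proof.
move=> mu_.
pose h := fun z : n.-tuple R * n.-tuple R =>
   (`|u (rowt z.1) - u (rowt z.2)| `^ p) * (enorm (rowt z.1 - rowt z.2) `^ (- (n%:R + p * s))).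
have mh : measurable_fun setT h.
  apply: (@measurable_funM _ _ _ _ (fun z : n.-tuple R * n.-tuple R => `|u (rowt z.1) - u (rowt z.2)| `^ p)
     (fun z : n.-tuple R * n.-tuple R => enorm (rowt z.1 - rowt z.2) `^ (- (n%:R + p * s)))).
    apply: (measurableT_comp (measurable_powR p)).
    apply: (measurableT_comp (@normr_measurable R setT)).
    apply: measurable_funB.
      exact: measurableT_comp mu_ measurable_fst.
    exact: measurableT_comp mu_ measurable_snd.
  exact: (measurableT_comp (measurable_powR _) (meas_enorm n)).
apply: (eq_measurable_fun (EFin \o h)) => [z _|]; first by rewrite /Kg /h /= powRN.
exact/measurable_EFinP.
Qed.

Definition Ib (M t : R) : bool := (M < t) && (t < M + 1).
Definition boxS m M : set (m.-tuple R) := [set w | all (Ib M) w].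

Lemma meas_Ib M : measurable [set t : R | Ib M t].
Proof.
have -> : [set t : R | Ib M t] = [set` `]M, (M + 1)[] by apply/seteqP; split => t; rewrite /= in_itv.
exact: measurable_itv.
Qed.

Lemma meas_box m M : measurable (boxS m M).
Proof.
elim: m => [|m IH].
  have -> : boxS 0 M = setT by apply/seteqP; split => // w _; rewrite /boxS /= tuple0.
  exact: measurableT.
have -> : boxS m.+1 M = (fun w : m.+1.-tuple R => thead w) @^-1` [set t | Ib M t] `&`
    (fun w : m.+1.-tuple R => [tuple of behead w]) @^-1` boxS m M.
  apply/seteqP; split => w; rewrite /boxS /=.
    by case/tupleP: w => x w /= /andP[-> ->].
  by case/tupleP: w => x w /= [-> ->].
apply: measurableI.
  have := @measurable_tnth _ _ m.+1 ord0 measurableT _ (meas_Ib M). rewrite setTI. exact.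
by have := measurable_behead measurableT IH; rewrite setTI.
Qed.

Lemma meas_indic_E m (S : set (m.-tuple R)) : measurable S ->
  measurable_fun setT (fun w => (\1_S w)%:E : \bar R).
Proof. by move=> mS; apply/measurable_EFinP; exact: measurable_indic. Qed.

Lemma box_pos m M : (0 < iterint m (fun s => (\1_(boxS m M) (tup m s))%:E))%E.
Proof.
elim: m => [|m IH].
  rewrite /= indicE mem_set ?lte_fin ?ltr01//.
  by rewrite /boxS /mkset; case: (tup 0 _) => -[].
set P := iterint m _ in IH.
have [r [r0 rP]] : exists r : R, 0 < r /\ (r%:E <= P)%E.
  have aux : forall Q : \bar R, (0 < Q)%E -> exists r : R, 0 < r /\ (r%:E <= Q)%E.
    move=> [x||] hx //; first by exists x; split; rewrite -?lte_fin.
    by exists 1; split; rewrite ?ltr01 ?leey.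
  exact: aux.
rewrite iterintS.
apply: (@lt_le_trans _ _ (\int[mu]_(t in [set: R]) (r * \1_[set t | Ib M t] t)%:E)%E).
  rewrite (@integralZl_indic _ _ _ mu setT measurableT (fun _ => [set t | Ib M t]) r)//; last exact: meas_Ib.
  2: by move=> /ltW; rewrite leNgt r0.
  rewrite integral_indic ?meas_Ib//.
  rewrite (_ : (_ `&` _) = [set` `]M, (M + 1)[]); last first.
    by apply/seteqP; split => t; rewrite /= in_itv /= ?andbT =>// -[].
  have H : (lebesgue_measure ([set` `]M, (M + 1)[] : set R) = 1%E).
    rewrite lebesgue_measure_itv /= lte_fin ltrDl ltr01 -EFinB.
    by rewrite addrAC subrr add0r.
  apply: (@lt_le_trans _ _ (r%:E * 1%E)%E); first by rewrite mule1 lte_fin.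
  rewrite -H; exact: lexx.
  exact: meas_Ib.
apply: ge0_le_integralT => t.
  by rewrite lee_fin mulr_ge0// ?ltW// indicE.
rewrite indicE; case: (boolP (t \in _)) => [/set_mem It|_]; last first.
  by rewrite mulr0 iterint_ge0// => s; rewrite lee_fin.
rewrite mulr1 (le_trans rP)// /P le_eqVlt; apply/orP; left; apply/eqP; congr iterint.
apply: funext => s; rewrite tupS !indicE; congr (_%:R%:E).
case: (boolP (tup m s \in boxS m M)) => [/set_mem H|/negP H].
  by rewrite mem_set // /boxS /= It.
rewrite memNset //; move=> H'; apply: H; apply/mem_set; move: H'; rewrite /boxS /= It.
by [].
Qed.

Lemma norm_row_ge n (x : 'rV[R]_n) (i : 'I_n) : `|x ord0 i| <= `|x|.
Proof.
rewrite [leRHS]/Num.Def.normr/= mx_normrE.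
exact: (le_bigmax _ (fun ij : 'I_1 * 'I_n => `|x ij.1 ij.2|) (ord0, i)).
Qed.

Lemma C_le0 n s p (Om : set 'rV[R]_n) alpha c u (M : R) :
  (0 < n)%N -> 0 < p -> alpha < 1 -> (forall x, Om x -> `|x| <= M) ->
  in_X0 s p Om u -> fine (gagliardo_int s p u) = 0 ->
  Rint_on Om (fun x => c x * posp (u x) `^ (1 - alpha)) <= 0.
Proof.
move=> n0 p0 a1 OmM [mU nullOut gagfin] fine0.
set G := gagliardo_int s p u.
have G0 : (0 <= G)%E.
  rewrite /G /gagliardo_int /lebint2 /lebint.
  apply: iterint_ge0 => s0; apply: iterint_ge0 => s1.
  by rewrite lee_fin divr_ge0 // powR_ge0.
have GE : G = 0%E.
  have : G \is a fin_num by rewrite ge0_fin_numE.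
  by move/fineK <-; rewrite fine0.
pose Kout (w : n.-tuple R) := iterint n (fun s' => Kg n s p u (w, tup n s')).
have mKout : measurable_fun setT Kout :=
  @iterint_meas n _ _ (Kg n s p u) (meas_Kg n s p u mU) (Kg_ge0 n s p u).
have GK : G = iterint n (fun s0 => Kout (tup n s0)).
  have E : forall s0 s1, Kg n s p u (tup n s0, tup n s1) =
      ((`|u (rowof n s0) - u (rowof n s1)| `^ p) / (enorm (rowof n s0 - rowof n s1) `^ (n%:R + p * s)))%:E.
    by move=> s0 s1; rewrite -!rowt_tup.
  rewrite /G /gagliardo_int /lebint2 /lebint /Kout; apply: (congr1 (iterint n)); apply: funext => s0.
  apply: (congr1 (iterint n)); apply: funext => s1.
  by rewrite E.
have Kout0 : forall w, (0 <= Kout w)%E.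
  by move=> w; apply: iterint_ge0 => s'; exact: Kg_ge0.
pose k := fun s0 => (Num.max (c (rowof n s0) * posp (u (rowof n s0)) `^ (1 - alpha)) 0
   * \1_Om (rowof n s0))%:E.
have k0 : forall s0, (0 <= k s0)%E.
  move=> s0; rewrite lee_fin; apply: mulr_ge0; first by rewrite le_max lexx orbT.
  by rewrite indicE ler0n.
pose Mb := `|M|.
pose i0 : 'I_n := Ordinal n0.
have key : iterint n k = 0%E.
  apply: (@iterint_zero n Kout Kout k mKout mKout Kout0 Kout0 k0); try by rewrite -GK.
  move=> s0 H0 _.
  apply/eqP; apply: contraT => kne.
  set x := rowof n s0 in kne.
  have Omx : Om x.
    move: kne; rewrite /k -/x indicE; case: (boolP (x \in Om)) => [/set_mem //|_].
    by rewrite mulr0 eqxx.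
  have gpos : 0 < c x * posp (u x) `^ (1 - alpha).
    rewrite ltNge; apply/negP => h; move: kne; rewrite /k -/x (max_r h).
    by rewrite mul0r eqxx.
  have ux0 : 0 < u x.
    have : posp (u x) `^ (1 - alpha) != 0.
      by apply: contraTneq gpos => ->; rewrite mulr0 ltxx.
    rewrite powR_eq0 negb_and negbK subr_eq0 => /orP[|/eqP a1'].
      rewrite /posp ltNge; apply: contra => h; rewrite (max_r h).
      by [].
    by move: a1; rewrite -a1' ltxx.
  pose Kin := fun w' : n.-tuple R => Kg n s p u (tup n s0, w').
  have mKin : measurable_fun setT Kin.
    apply: (measurableT_comp (meas_Kg n s p u mU)).
    by apply: measurable_fun_pair => //; exact: measurable_cst.
  pose Z0 : set (n.-tuple R) := [set w | u (rowt w) = 0].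
  have mZ0 : measurable Z0.
    by have := mU measurableT _ (measurable_set1 0); rewrite setTI.
  have Z1 : iterint n (fun s' => (\1_(boxS n Mb `&` Z0) (tup n s'))%:E) = 0%E.
    apply: (@iterint_zero n Kin Kin _ mKin mKin (fun w => Kg_ge0 _ _ _ _ _) (fun w => Kg_ge0 _ _ _ _ _)).
    - by move=> s'; rewrite lee_fin indicE.
    - exact: H0.
    - exact: H0.
    move=> s' Hk _; rewrite indicE; case: (boolP (_ \in _)) => [/set_mem [Hb Hz]|_]; last by [].
    have E2 : Kin (tup n s') = ((`|u x - u (rowt (tup n s'))| `^ p) /
        (enorm (x - rowt (tup n s')) `^ (n%:R + p * s)))%:E.
      by rewrite /Kin /Kg /x -rowt_tup.
    have Hz' : u (rowt (tup n s')) = 0 := Hz.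
    have xy : x - rowt (tup n s') != 0.
      rewrite subr_eq0; apply/eqP => exy.
      by move: Hz'; rewrite -exy => /eqP; rewrite gt_eqF.
    have pos : 0 < (`|u x - u (rowt (tup n s'))| `^ p) /
        (enorm (x - rowt (tup n s')) `^ (n%:R + p * s)).
      apply: divr_gt0; first by apply: powR_gt0; rewrite Hz' subr0 normr_gt0 gt_eqF.
      by apply: powR_gt0; apply: enorm_gt0.
    exfalso; move: Hk; rewrite E2 => -[] /eqP; rewrite (gt_eqF pos).
    by [].
  have Z2 : iterint n (fun s' => (\1_(boxS n Mb `&` ~` Z0) (tup n s'))%:E) = 0%E.
    apply/eqP; rewrite eq_le; apply/andP; split; last first.
      by apply: iterint_ge0 => s'; rewrite lee_fin indicE.
    rewrite -nullOut /lebint; apply: iterint_le => s'.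
      by rewrite lee_fin indicE.
    rewrite indicE; case: (boolP (_ \in _)) => [/set_mem [Hb Hz]|_]; last first.
      by rewrite lee_fin mulr_ge0 // indicE.
    have nOm : ~ Om (rowof n s').
      move=> /OmM; apply/negP; rewrite -ltNge.
      move/allP: Hb => /(_ _ (mem_tnth i0 _)); rewrite tnth_tup => /andP[Hs _].
      apply: (le_lt_trans (ler_norm M)); apply: (lt_le_trans Hs).
      apply: (le_trans (ler_norm _)).
      by have := @norm_row_ge n (rowof n s') i0; rewrite mxE.
    have nZ : u (rowof n s') != 0 by apply/eqP; rewrite -rowt_tup.
    by rewrite indicE (mem_set (nOm : (~` Om) (rowof n s'))) nZ mulr1.
  have Zb : iterint n (fun s' => (\1_(boxS n Mb) (tup n s'))%:E) = 0%E.
    apply: (@iterint_zero n (fun w => (\1_(boxS n Mb `&` ~` Z0) w)%:E)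
      (fun w => (\1_(boxS n Mb `&` Z0) w)%:E)).
    - apply: meas_indic_E; apply: measurableI; first exact: meas_box.
      exact: measurableC.
    - by apply: meas_indic_E; apply: measurableI; first exact: meas_box.
    - by move=> w; rewrite lee_fin indicE.
    - by move=> w; rewrite lee_fin indicE.
    - by move=> s'; rewrite lee_fin indicE.
    - exact: Z2.
    - exact: Z1.
    move=> s' H1 H2; rewrite indicE; case: (boolP (_ \in _)) => [/set_mem Hb|_]; last by [].
    exfalso; case: (pselect (Z0 (tup n s'))) => hz.
      move: H2; rewrite indicE (mem_set (conj Hb hz : (boxS n Mb `&` Z0) (tup n s'))).
      by move/eqP; rewrite eqe oner_eq0.
    move: H1; rewrite indicE (mem_set (conj Hb hz : (boxS n Mb `&` ~` Z0) (tup n s'))).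
    by move/eqP; rewrite eqe oner_eq0.
  by move: (box_pos n Mb); rewrite Zb ltxx.
have key' : lebint (fun x => (Num.max (c x * posp (u x) `^ (1 - alpha)) 0 * \1_Om x)%:E) = 0%E := key.
rewrite /Rint_on key' sub0r oppr_le0; apply: fine_ge0.
apply: iterint_ge0 => s0; rewrite lee_fin; apply: mulr_ge0; first by rewrite le_max lexx orbT.
by rewrite indicE ler0n.
Qed.

Lemma alg1 (A B C F p q theta alpha b lambda : R) :
  1 < p -> 1 < theta -> 0 < alpha < 1 -> p * theta < q ->
  A + b * B - C - lambda * q * F = 0 ->
  0 < (p - 1) * A + b * (p * theta - 1) * B + alpha * C - lambda * q * (q - 1) * F ->
  p^-1 * A + b / (p * theta) * B - (1 - alpha)^-1 * C - lambda * F
  < - ((q - p) * (p + alpha - 1) / (q * p * (1 - alpha))) * A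
    - b * ((q - p * theta) * (p * theta + alpha - 1) / (q * p * theta * (1 - alpha))) * B.
Proof.
move=> p1 th1 /andP[a0 a1] pq H1 H2.
have p0 : p != 0 by apply: lt0r_neq0; lra.
have th0 : theta != 0 by apply: lt0r_neq0; lra.
have pth : 1 < p * theta by rewrite -[1]mulr1; apply: ltr_pM => //; lra.
have q0 : q != 0 by apply: lt0r_neq0; lra.
have a10 : 1 - alpha != 0 by apply: lt0r_neq0; lra.
set D := (q + alpha - 1) * C - (q - p) * A - b * (q - p * theta) * B.
have hD : D = ((p - 1) * A + b * (p * theta - 1) * B + alpha * C - lambda * q * (q - 1) * F)
   - (q - 1) * (A + b * B - C - lambda * q * F) by rewrite /D; ring.
have Dpos : 0 < D by rewrite hD H1 mulr0 subr0.
have hF : lambda * F = (A + b * B - C) / q.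
  have -> : A + b * B - C = lambda * q * F by move/eqP: H1; rewrite subr_eq0 => /eqP.
  by field.
rewrite -subr_gt0.
have -> : - ((q - p) * (p + alpha - 1) / (q * p * (1 - alpha))) * A
    - b * ((q - p * theta) * (p * theta + alpha - 1) / (q * p * theta * (1 - alpha))) * B
    - (p^-1 * A + b / (p * theta) * B - (1 - alpha)^-1 * C - lambda * F) = D / (q * (1 - alpha)).
  by rewrite hF /D; field; rewrite a10 q0 th0 p0.
apply: divr_gt0 => //; apply: mulr_gt0; lra.
Qed.

Lemma alg2 (A B p q theta alpha b : R) :
  1 < p -> 1 < theta -> 0 < alpha < 1 -> p * theta < q -> 0 < b -> 0 <= A -> 0 < B ->
  - ((q - p) * (p + alpha - 1) / (q * p * (1 - alpha))) * A
    - b * ((q - p * theta) * (p * theta + alpha - 1) / (q * p * theta * (1 - alpha))) * B < 0.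
Proof.
move=> p1 th1 /andP[a0 a1] pq b0 A0 B0.
have pth : 1 < p * theta by rewrite -[1]mulr1; apply: ltr_pM => //; lra.
have ppth : p < p * theta by rewrite ltr_pMr //; lra.
have d1 : 0 < q * p * (1 - alpha) by apply: mulr_gt0; [apply: mulr_gt0|]; lra.
have d2 : 0 < q * p * theta * (1 - alpha).
  by apply: mulr_gt0; [apply: mulr_gt0; [apply: mulr_gt0|]|]; lra.
have n1 : 0 <= (q - p) * (p + alpha - 1) by apply: mulr_ge0; lra.
have n2 : 0 < (q - p * theta) * (p * theta + alpha - 1) by apply: mulr_gt0; lra.
have k1 : 0 <= (q - p) * (p + alpha - 1) / (q * p * (1 - alpha)) by apply: divr_ge0; [|apply: ltW].
have k2 : 0 < (q - p * theta) * (p * theta + alpha - 1) / (q * p * theta * (1 - alpha)) by apply: divr_gt0.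
have h1 : 0 <= (q - p) * (p + alpha - 1) / (q * p * (1 - alpha)) * A by apply: mulr_ge0.
have h2 : 0 < b * ((q - p * theta) * (p * theta + alpha - 1) / (q * p * theta * (1 - alpha))) * B.
  by apply: mulr_gt0 => //; apply: mulr_gt0.
lra.
Qed.

End S.

Theorem corollary3p1 (R : realType) (n : nat) (s p : R) (Om : set 'rV[R]_n)
    (a b theta alpha : R) (c : 'rV[R]_n -> R) (lambda q : R)
    (f : 'rV[R]_n -> R -> R) :
  0 < s < 1 -> 1 < p -> p * s < n%:R ->
  bounded_smooth_domain Om ->
  0 < a -> 0 < b -> 1 < theta -> 0 < alpha < 1 ->
  measurable_Rn c -> (exists M : R, forall x, Om x -> `|c x| <= M) ->
  (forall x, Om x -> 0 <= c x) ->
  0 < lambda ->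
  p * theta < q -> q <= n%:R * p / (n%:R - p * s) ->
  homogeneous2 Om q f ->
  forall u : 'rV[R]_n -> R,
    Nplus s p Om a b theta alpha c lambda q f u ->
    J_lambda s p Om a b theta alpha c lambda f u
      <= - ((q - p) * (p + alpha - 1) / (q * p * (1 - alpha)))
           * (a * X0norm s p u `^ p + Lnorm_on Om p u `^ p)
         - b * ((q - p * theta) * (p * theta + alpha - 1)
                / (q * p * theta * (1 - alpha))) * X0norm s p u `^ (p * theta)
    /\ - ((q - p) * (p + alpha - 1) / (q * p * (1 - alpha)))
           * (a * X0norm s p u `^ p + Lnorm_on Om p u `^ p)
         - b * ((q - p * theta) * (p * theta + alpha - 1)
                / (q * p * theta * (1 - alpha))) * X0norm s p u `^ (p * theta)
       < 0.
Proof.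
move=> /andP[s0 s1] p1 ps Obsd a0 b0 th1 hal mc cbd c0 lam0 pthq qle hom u [hX H1 H2].
have p0 : 0 < p by lra.
have n0 : (0 < n)%N.
  rewrite lt0n; apply/eqP => n0'; move: ps; rewrite n0' => ps.
  have : 0 < p * s by apply: mulr_gt0.
  by rewrite ltNge (ltW ps).
have [M OmM] : exists M, forall x, Om x -> `|x| <= M by case: Obsd.
move: H1 H2; rewrite /phi1 /phi2 /J_lambda /Aterm /Cterm /Fterm.
move EX: (X0norm s p u) => X.
move EL: (Lnorm_on Om p u) => L.
move EC: (Rint_on Om (fun x => c x * posp (u x) `^ (1 - alpha))) => C.
move EF: (Rint_on Om (fun x => Fprim f x (posp (u x)))) => F.
move=> H1 H2.
have A0 : 0 <= a * X `^ p + L `^ p.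
  by apply: addr_ge0; [apply: mulr_ge0; [apply: ltW|apply: powR_ge0]|apply: powR_ge0].
split.
  apply: ltW.
  exact: (@alg1 R (a * X `^ p + L `^ p) (X `^ (p * theta)) C F p q theta alpha b lambda p1 th1 hal pthq H1 H2).
apply: (@alg2 R (a * X `^ p + L `^ p) (X `^ (p * theta)) p q theta alpha b p1 th1 hal pthq b0 A0).
rewrite lt_neqAle powR_ge0 andbT; apply/eqP => B0.
have X0 : X = 0 by apply: (@powR_eq0_eq0 _ _ (p * theta)); rewrite B0.
have fine0 : fine (gagliardo_int s p u) = 0.
  by apply: (@powR_eq0_eq0 _ _ p^-1); rewrite -X0 -EX.
have Cle : C <= 0.
  move/andP: hal => [_ al1].
  rewrite -EC; exact: (@C_le0 R n s p Om alpha c u M n0 p0 al1 OmM hX fine0).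
have ppth : p < p * theta by rewrite ltr_pMr //; lra.
have : 0 < (p - q) * (a * X `^ p + L `^ p) + (alpha + q - 1) * C.
  move: H1 H2; rewrite -B0 => H1 H2.
  have -> : (p - q) * (a * X `^ p + L `^ p) + (alpha + q - 1) * C =
     ((p - 1) * (a * X `^ p + L `^ p) + b * (p * theta - 1) * 0 + alpha * C
       - lambda * q * (q - 1) * F)
     - (q - 1) * (a * X `^ p + L `^ p + b * 0 - C - lambda * q * F) by ring.
  by rewrite H1 [(q - 1) * 0]mulr0 subr0.
have h1 : (p - q) * (a * X `^ p + L `^ p) <= 0 by apply: mulr_le0_ge0 => //; lra.
have h2 : (alpha + q - 1) * C <= 0.
  move/andP: hal => [al0 _].
  by apply: mulr_ge0_le0 => //; lra.
lra.
Qed.
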